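(* For every $i\in\{0,\ldots,k-n\}$, the interior of $C_i$ in $\mathcal{F}_{n+1,2d}$ is $$\mathrm{int}(C_i)=\{f\in\mathcal{F}_{n+1,2d} : \exists A\in\mathcal{G}^{-1}(f)\text{ such that } q_A(z)>0\text{ for all }[z]\in V_i(\mathbb{R})\}.$$
   Context: Let $n,d\geq 1$ be integers. $\mathcal{F}_{n+1,l}$ denotes the real vector space of real forms of degree $l$ in $X=(X_0,\ldots,X_n)$, with its Euclidean topology. Let $k:=\binom{n+d}{n}-1$. Order $I_{n+1,d}:=\{\alpha\in\mathbb{N}_0^{n+1}: |\alpha|=d\}$ lexicographically in decreasing order as $\alpha_0,\ldots,\alpha_k$ (so $\alpha_0=(d,0,\ldots,0)$, $\alpha_k=(0,\ldots,0,d)$), and set $m_j(X):=X^{\alpha_j}$. For $A\in\mathrm{Sym}_{k+1}(\mathbb{R})$ let $q_A(Z):=ZAZ^t$, $Z=(Z_0,\ldots,Z_k)$, and let $\mathcal{G}:\mathrm{Sym}_{k+1}(\mathbb{R})\to\mathcal{F}_{n+1,2d}$, $\mathcal{G}(A):=q_A(m_0(X),\ldots,m_k(X))$. For $i\in\{0,\ldots,k-n\}$ let $H_i:=\{[z]\in\mathbb{P}^k(\mathbb{C}) : \exists x\in\mathbb{C}^{n+1},\ (z_0,\ldots,z_{n+i})=(m_0(x),\ldots,m_{n+i}(x))\}$, $V_i$ its Zariski closure in $\mathbb{P}^k$, $V_i(\mathbb{R})$ its real points, and $C_i:=\{f\in\mathcal{F}_{n+1,2d} : \exists A\in\mathcal{G}^{-1}(f),\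 q_A(z)\geq 0\ \forall [z]\in V_i(\mathbb{R})\}$. (For a quadratic form the conditions $q_A(z)\geq 0$, $q_A(z)>0$ do not depend on the chosen representative $z$ of $[z]$.) *)

(* Defs.v *)
From HB Require Import structures.
From mathcomp Require Import all_boot all_order all_algebra.
From mathcomp Require Import reals.
From mathcomp Require Import complex.
From mathcomp Require Import mpoly.

Set Implicit Arguments.
Unset Strict Implicit.
Unset Printing Implicit Defensive.

Import Order.TTheory GRing.Theory Num.Theory.
Local Open Scope ring_scope.

Definition kk (n d : nat) : nat := ('C(n + d, n)).-1.

(* I_{n+1,d}: exponent vectors of degree d in n+1 variables, listed in
   decreasing lexicographic order (X_0 most significant).  On monomials of
   equal degree the canonical order of multinomials' 'X_{1..n} is the
   lexicographic order of the exponent tuples. *)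
Definition mons (n d : nat) : seq 'X_{1..n.+1} :=
  sort (fun m1 m2 : 'X_{1..n.+1} => (m2 <= m1)%O)
       [seq m <- [seq val m | m : 'X_{1..n.+1 < d.+1}] | mdeg m == d].

Definition alpha (n d : nat) (j : 'I_((kk n d).+1)) : 'X_{1..n.+1} :=
  nth 0%MM (mons n d) j.

Definition mono (R : comNzRingType) (n d : nat) (j : 'I_((kk n d).+1))
  : {mpoly R[n.+1]} := 'X_[alpha j].

Definition is_form (R : realType) (n l : nat) (f : {mpoly R[n.+1]}) : Prop :=
  f \is l.-homog.

Definition is_symmx (R : realType) (m : nat) (A : 'M[R]_m) : Prop := A^T = A.

Definition qA (R : comNzRingType) (m : nat) (A : 'M[R]_m) (z : 'I_m -> R) : R :=
  \sum_(a < m) \sum_(b < m) z a * A a b * z b.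

Definition Gmap (R : realType) (n d : nat) (A : 'M[R]_((kk n d).+1))
  : {mpoly R[n.+1]} :=
  \sum_(a < (kk n d).+1) \sum_(b < (kk n d).+1)
     A a b *: (mono R a * mono R b).

(* H_i, as a set of representatives z in C^{k+1} \ {0} of points [z] *)
Definition Hset (R : realType) (n d i : nat) (z : 'I_((kk n d).+1) -> complex R)
  : Prop :=
  (exists j, z j != 0) /\
  exists x : 'I_n.+1 -> complex R,
    forall j : 'I_((kk n d).+1), (j <= n + i)%N -> z j = (mono (complex R) j).@[x].

(* Zariski closure in P^k(C) of a set S of points given by representatives:
   the common zeros of all homogeneous polynomials vanishing on S. *)
Definition zariski_closure (C : comNzRingType) (m : nat)
  (S : ('I_m.+1 -> C) -> Prop) (z : 'I_m.+1 -> C) : Prop :=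
  (exists j, z j != 0) /\
  forall (e : nat) (p : {mpoly C[m.+1]}), p \is e.-homog ->
    (forall w, S w -> p.@[w] = 0) -> p.@[z] = 0.

Definition Vset (R : realType) (n d i : nat) : ('I_((kk n d).+1) -> complex R) -> Prop :=
  zariski_closure (@Hset R n d i).

(* V_i(R): real points, given by real representatives *)
Definition VRset (R : realType) (n d i : nat) (z : 'I_((kk n d).+1) -> R) : Prop :=
  @Vset R n d i (fun j => (z j)%:C%C).

Definition Cset (R : realType) (n d i : nat) (f : {mpoly R[n.+1]}) : Prop :=
  is_form (2 * d) f /\
  exists A : 'M[R]_((kk n d).+1),
    is_symmx A /\ Gmap A = f /\ forall z, @VRset R n d i z -> 0 <= qA A z.

(* interior of a subset S of F_{n+1,l} for the Euclidean topology of
   F_{n+1,l}, i.e. of its coefficient vector (sup-norm balls). *)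
Definition form_interior (R : realType) (n l : nat)
  (S : {mpoly R[n.+1]} -> Prop) (f : {mpoly R[n.+1]}) : Prop :=
  is_form l f /\
  exists eps : R, 0 < eps /\
    forall g : {mpoly R[n.+1]}, is_form l g ->
      (forall m : 'X_{1..n.+1}, `|g@_m - f@_m| < eps) -> S g.

(* Main.v *)
Require Import Defs.
From HB Require Import structures.
From mathcomp Require Import all_boot all_order all_algebra.
From mathcomp Require Import reals complex mpoly.
From mathcomp Require Import boolp classical_sets topology normedtype derive.
From mathcomp Require Import ring.
Import Order.TTheory GRing.Theory Num.Theory.
Import numFieldNormedType.Exports.
Local Open Scope ring_scope.
Section Ana.
Variable R : realType.

Lemma cont_sum (T : topologicalType) I (s : seq I) (F : I -> T -> R) :
  (forall i, continuous (F i)) -> continuous (fun x => \sum_(i <- s) F i x).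
Proof.
move=> HF; elim: s => [|a s IH].
  have -> : (fun x => \sum_(i <- [::]) F i x) = fun=> 0.
    by apply: funext => x; rewrite big_nil.
  exact: cst_continuous.
have -> : (fun x => \sum_(i <- a :: s) F i x) =
   (F a) \+ (fun x => \sum_(i <- s) F i x).
  by apply: funext => x; rewrite big_cons.
by move=> x; apply: continuousD; [exact: HF| exact: IH].
Qed.

Lemma cont_prod (T : topologicalType) I (s : seq I) (F : I -> T -> R) :
  (forall i, continuous (F i)) -> continuous (fun x => \prod_(i <- s) F i x).
Proof.
move=> HF; elim: s => [|a s IH].
  have -> : (fun x => \prod_(i <- [::]) F i x) = fun=> 1.
    by apply: funext => x; rewrite big_nil.
  exact: cst_continuous.
have -> : (fun x => \prod_(i <- a :: s) F i x) =
   (F a) \* (fun x => \prod_(i <- s) F i x).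
  by apply: funext => x; rewrite big_cons.
by move=> x; apply: continuousM; [exact: HF| exact: IH].
Qed.

Lemma cont_expr (T : topologicalType) (F : T -> R) k :
  continuous F -> continuous (fun x => F x ^+ k).
Proof.
move=> HF; elim: k => [|k IH].
  have -> : (fun x => F x ^+ 0) = fun=> 1 by apply: funext => x; rewrite expr0.
  exact: cst_continuous.
have -> : (fun x => F x ^+ k.+1) = F \* (fun x => F x ^+ k).
  by apply: funext => x; rewrite exprS.
by move=> x; apply: continuousM; [exact: HF| exact: IH].
Qed.

Lemma cont_mul (T : topologicalType) (F G : T -> R) :
  continuous F -> continuous G -> continuous (fun x => F x * G x).
Proof. by move=> HF HG x; apply: (continuousM (HF x) (HG x)). Qed.

Lemma cont_coord N (j : 'I_N) : continuous (fun v : 'rV[R]_N => v ord0 j).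
Proof. exact: coord_continuous. Qed.

Definition polyfun N (s : seq 'X_{1..N}) (c : 'X_{1..N} -> R) (v : 'rV[R]_N) : R :=
  \sum_(m <- s) c m * \prod_(i < N) (v ord0 i) ^+ m i.

Lemma polyfun_cont N s c : continuous (@polyfun N s c).
Proof.
apply: cont_sum => m; apply: cont_mul; first exact: cst_continuous.
apply: cont_prod => i; apply: cont_expr; exact: cont_coord.
Qed.

Lemma qA_cont N (A : 'M[R]_N) : continuous (fun v : 'rV[R]_N => qA A (fun j => v ord0 j)).
Proof.
apply: cont_sum => a; apply: cont_sum => b; apply: cont_mul; last exact: cont_coord.
apply: cont_mul; [exact: cont_coord | exact: cst_continuous].
Qed.

Lemma coord_le_norm N (v : 'rV[R]_N) j : `|v ord0 j| <= `|v|.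
Proof.
rewrite [X in _ <= X]/Num.Def.normr /= mx_normrE.
exact: (le_bigmax 0 (fun ij : 'I_1 * 'I_N => `|v ij.1 ij.2|) (ord0, j)).
Qed.

Lemma coercive N (S : ('I_N -> R) -> Prop) (q : ('I_N -> R) -> R)
 (hK : closed [set v : 'rV[R]_N | `|v| = 1 /\ S (fun j => v ord0 j)]%classic)
 (hq : continuous (fun v : 'rV[R]_N => q (fun j => v ord0 j)))
 (hSscale : forall z l, S z -> l != 0 -> S (fun j => l * z j))
 (hqscale : forall z l, q (fun j => l * z j) = l^+2 * q z)
 (hS0 : forall z, S z -> exists j, z j != 0)
 (hpos : forall z, S z -> 0 < q z) :
 exists2 c, 0 < c & forall z, S z -> c * `|(\row_j z j : 'rV[R]_N)| ^+ 2 <= q z.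
Proof.
set K := [set v : 'rV[R]_N | `|v| = 1 /\ S (fun j => v ord0 j)]%classic.
have Kcomp : compact K.
  apply: bounded_closed_compact => //.
  exists 1; split; first by rewrite num_real.
  move=> x x1 v [nv _] /=; rewrite nv; exact: ltW.
have normal : forall z, S z -> let v := \row_j z j in
   0 < `|v| /\ K (`|v|^-1 *: v) /\ z = (fun j => `|v| * (`|v|^-1 *: v) ord0 j).
  move=> z Sz v.
  have vn0 : v != 0.
    have [j zj] := hS0 z Sz; apply/eqP => /rowP /(_ j); rewrite !mxE.
    by move/eqP; rewrite (negbTE zj).
  have vpos : 0 < `|v| by rewrite normr_gt0.
  split => //; split; last first.
    by apply: funext => j; rewrite !mxE mulrA mulfV ?gt_eqF // mul1r.
  split; first by rewrite normrZ normfV normr_id mulVf // gt_eqF.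
  have -> : (fun j => (`|v|^-1 *: v) ord0 j) = (fun j => `|v|^-1 * z j).
    by apply: funext => j; rewrite !mxE.
  by apply: hSscale => //; rewrite invr_eq0 gt_eqF.
have [K0|Kne] := pselect (K !=set0)%classic; last first.
  exists 1 => // z Sz; exfalso; apply: Kne.
  have [_ [Kw _]] := normal z Sz; by eexists; exact: Kw.
have cq : {within K, continuous (fun v : 'rV[R]_N => q (fun j => v ord0 j))}%classic.
  exact: continuous_subspaceT.
have [c0 /set_mem [c0n Sc0] minc] := EVT_min_rV K0 Kcomp cq.
exists (q (fun j => c0 ord0 j)); first exact: hpos.
move=> z Sz.
have [vpos [Kw zE]] := normal z Sz.
set v := \row_j z j in vpos Kw zE.
set w := `|v|^-1 *: v in Kw zE.
have := minc w (mem_set Kw) => hw.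
rewrite {2}zE hqscale.
by rewrite mulrC ler_wpM2l // exprn_ge0 // ltW.
Qed.
End Ana.
Section VR.
Variable R : realType.


Lemma sum_complex (T : Type) (s : seq T) (c : T -> R[i]) (r : T -> R) :
  \sum_(x <- s) c x * (real_complex R (r x)) =
  ((\sum_(x <- s) complex.Re (c x) * r x) +i* (\sum_(x <- s) complex.Im (c x) * r x))%C.
Proof.
elim: s => [|a s IH]; first by rewrite !big_nil.
rewrite !big_cons IH; case: (c a) => u v /=; simpc.
by rewrite (mulrC v).
Qed.

Lemma meval_real N (p : {mpoly R[i][N]}) (z : 'I_N -> R) :
  p.@[fun j => (real_complex R (z j))] =
  ((\sum_(m <- msupp p) complex.Re p@_m * \prod_i z i ^+ m i) +i*
  (\sum_(m <- msupp p) complex.Im p@_m * \prod_i z i ^+ m i))%C.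
Proof.
rewrite mevalE -sum_complex; apply: eq_bigr => m _.
by rewrite rmorph_prod; congr (_ * _); apply: eq_bigr => j _; rewrite rmorphXn.
Qed.

Lemma meval_homog_scale (C : comNzRingType) M (p : {mpoly C[M]}) e c w :
  p \is e.-homog -> p.@[fun j => c * w j] = c ^+ e * p.@[w].
Proof.
move=> hp; rewrite !mevalE mulr_sumr; apply: eq_big_seq => m hm.
rewrite mulrCA; congr (_ * _).
rewrite -(dhomog_mf hp hm) /= mdegE.
under eq_bigr do rewrite exprMn.
by rewrite big_split /= prodrXr.
Qed.


Lemma rc_eq0 (x : R) : (real_complex R x == 0) = (x == 0).
Proof. by rewrite fmorph_eq0. Qed.

Variables n d i : nat.
Local Notation N := (kk n d).+1.

Lemma VR_nz z : @VRset R n d i z -> exists j, z j != 0.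
Proof. by case=> [[j hj] _]; exists j; rewrite -rc_eq0. Qed.

Lemma VR_scale z l : @VRset R n d i z -> l != 0 -> @VRset R n d i (fun j => l * z j).
Proof.
move=> [[j hj] hz] hl; split.
  by exists j; rewrite rmorphM mulf_neq0 // rc_eq0.
move=> e p hp hv.
have -> : (fun j => real_complex R (l * z j)) =
   (fun j => real_complex R l * real_complex R (z j)).
  by apply: funext => k; rewrite rmorphM.
by rewrite (@meval_homog_scale _ _ p e _ _ hp) (hz e p hp hv) mulr0.
Qed.

End VR.

Section VRc.
Variable R : realType.
Variables n d i : nat.
Local Notation N := (kk n d).+1.

Lemma closed_zero_set M (F : 'rV[R]_M -> R) : continuous F -> closed [set v | F v = 0]%classic.
Proof.
move=> cF; apply: (@preimage_closed _ _ F [set 0]%classic).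
  by move=> x _; exact: cF.
exact: closed_eq.
Qed.

Lemma VR_closed :
  closed [set v : 'rV[R]_N | `|v| = 1 /\ @VRset R n d i (fun j => v ord0 j)]%classic.
Proof.
set D := [set ep : nat * {mpoly R[i][N]} | ep.2 \is ep.1.-homog /\
   forall w, @Hset R n d i w -> ep.2.@[w] = 0]%classic.
have -> : [set v : 'rV[R]_N | `|v| = 1 /\ @VRset R n d i (fun j => v ord0 j)]%classic =
  ([set v : 'rV[R]_N | `|v| = 1] `&`
   \bigcap_(ep in D) ([set v | @polyfun R N (msupp ep.2) (fun m => complex.Re ep.2@_m) v = 0] `&`
                      [set v | @polyfun R N (msupp ep.2) (fun m => complex.Im ep.2@_m) v = 0]))%classic.
  apply/seteqP; split => v /=.
    move=> [v1 [_ hv]]; split => // [[e p]] /= [hp hw].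
    have := hv e p hp hw; rewrite meval_real => -[] h1 h2.
    by split.
  move=> [v1 hv]; split => //; split.
    apply/not_existsP => hall; move: v1; rewrite (_ : v = 0) ?normr0.
      by move/eqP; rewrite eq_sym oner_eq0.
    apply/rowP => j; rewrite mxE; apply/eqP; apply/negPn/negP; by have := hall j; rewrite rc_eq0.
  move=> e p hp hw; have [h1 h2] := hv (e, p) (conj hp hw).
  rewrite meval_real; rewrite /polyfun in h1 h2; by rewrite h1 h2.
apply: closedI.
  apply: (@preimage_closed _ _ (fun v : 'rV[R]_N => `|v|) [set 1]%classic).
    by move=> x _; exact: norm_continuous.
  exact: closed_eq.
apply: closed_bigI => ep _; apply: closedI; apply: closed_zero_set; exact: polyfun_cont.
Qed.

Lemma qA_scale M (A : 'M[R]_M) z l : qA A (fun j => l * z j) = l ^+ 2 * qA A z.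
Proof.
rewrite /qA mulr_sumr; apply: eq_bigr => a _; rewrite mulr_sumr; apply: eq_bigr => b _.
by rewrite expr2; ring.
Qed.

Lemma qA_add M (A B : 'M[R]_M) z : qA (A + B) z = qA A z + qA B z.
Proof.
rewrite /qA -big_split; apply: eq_bigr => a _; rewrite -big_split; apply: eq_bigr => b _.
by rewrite mxE /= mulrDr mulrDl.
Qed.

Lemma qA_id M (c : R) z : qA (c *: (1%:M : 'M[R]_M)) z = c * \sum_j z j ^+ 2.
Proof.
rewrite /qA mulr_sumr; apply: eq_bigr => a _.
rewrite (bigD1 a) //= big1 ?addr0; first by rewrite !mxE eqxx expr2 mulr1; ring.
by move=> b hb; rewrite !mxE eq_sym (negbTE hb) mulr0 mulr0 mul0r.
Qed.

Lemma qA_bound M (B : 'M[R]_M) z e K : (forall a b, `|B a b| <= e) ->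
  (forall j, `|z j| <= K) -> `|qA B z| <= (M * M)%:R * (e * K ^+ 2).
Proof.
move=> hB hz; rewrite /qA.
have -> : (M * M)%:R * (e * K ^+ 2) = \sum_(a < M) \sum_(b < M) (e * K ^+ 2).
  by rewrite !sumr_const !card_ord -mulrnA mulr_natl.
apply: le_trans (ler_norm_sum _ _ _) _.
apply: ler_sum => a _.
apply: le_trans (ler_norm_sum _ _ _) _.
apply: ler_sum => b _.
rewrite !normrM expr2.
have h0 : 0 <= K by apply: le_trans (hz a); exact: normr_ge0.
have := hz a; have := hz b; have := hB a b => h1 h2 h3.
rewrite mulrAC [e * _]mulrC.
apply: ler_pM => //; first by rewrite mulr_ge0.
by apply: ler_pM.
Qed.

Lemma VR_coercive (A : 'M[R]_N) : (forall z, @VRset R n d i z -> 0 < qA A z) ->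
  exists2 c, 0 < c & forall z, @VRset R n d i z -> c * `|(\row_j z j : 'rV[R]_N)| ^+ 2 <= qA A z.
Proof.
move=> hpos; apply: coercive.
- exact: VR_closed.
- exact: qA_cont.
- by move=> z l hz hl; apply: VR_scale.
- by move=> z l; apply: qA_scale.
- by move=> z hz; exact: (@VR_nz R n d i z hz).
- exact: hpos.
Qed.
End VRc.

Section Comb.
Variables n d : nat.

Lemma mem_mons m : (m \in mons n d) = (mdeg m == d).
Proof.
rewrite /mons mem_sort mem_filter andbC; case: eqP => //= hm.
rewrite andbT; apply/mapP; have h : (mdeg m < d.+1)%N by rewrite hm.
by exists (BMultinom h); rewrite ?mem_enum.
by rewrite andbF.
Qed.

Lemma uniq_mons : uniq (mons n d).
Proof.
rewrite /mons sort_uniq filter_uniq // map_inj_uniq ?enum_uniq //.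
exact: val_inj.
Qed.

Lemma size_mons : size (mons n d) = (kk n d).+1.
Proof.
have hp : perm_eq (mons n d)
   [seq s2m t | t : d.-tuple 'I_n.+1 <- enum (mpoly.basis n.+1 d)].
  apply: uniq_perm; [exact: uniq_mons | exact: uniq_basis |].
  by move=> m; rewrite mem_mons basis_cover.
rewrite (perm_size hp) size_basis /kk prednK; last by rewrite bin_gt0 leq_addr.
by rewrite -[in LHS]bin_sub ?leq_addr // addKn addnC.
Qed.

Lemma mdeg_alpha (j : 'I_(kk n d).+1) : mdeg (alpha j) = d.
Proof.
apply/eqP; rewrite -mem_mons /alpha; apply: mem_nth; rewrite size_mons; exact: ltn_ord.
Qed.

Lemma alpha_surj m : mdeg m = d -> exists j : 'I_(kk n d).+1, alpha j = m.
Proof.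
move=> hm; have hin : m \in mons n d by rewrite mem_mons hm.
have hi : (index m (mons n d) < (kk n d).+1)%N by rewrite -size_mons index_mem.
by exists (Ordinal hi); rewrite /alpha /= nth_index.
Qed.
End Comb.

Lemma s2m_cat k (s1 s2 : seq 'I_k) : s2m (s1 ++ s2) = (s2m s1 + s2m s2)%MM.
Proof. by apply/mnmP => j; rewrite mnmDE !mnmE count_cat. Qed.

Lemma mdeg_s2m k (s : seq 'I_k) : mdeg (s2m s) = size s.
Proof.
elim: s => [|a s IH].
  by rewrite mdegE big1 // => j _; rewrite mnmE.
have h1 : mdeg (s2m [:: a]) = 1%N.
  rewrite mdegE (bigD1 a) //= big1 ?mnmE /= ?eqxx ?addn0 //.
  by move=> j hj; rewrite mnmE /= eq_sym (negbTE hj).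
by rewrite (_ : a :: s = [:: a] ++ s) // s2m_cat mdegD IH h1.
Qed.

Lemma split_mon k (m : 'X_{1..k}) e : mdeg m = (e + e)%N ->
  exists m1 m2 : 'X_{1..k}, [/\ mdeg m1 = e, mdeg m2 = e & m = (m1 + m2)%MM].
Proof.
move=> hm; set t := m2s m.
have ht : size t = (e + e)%N by rewrite size_m2s.
exists (s2m (take e t)), (s2m (drop e t)); split.
- by rewrite mdeg_s2m size_takel // ht leq_addr.
- by rewrite mdeg_s2m size_drop ht addnK.
- by rewrite -s2m_cat cat_take_drop s2mK.
Qed.

Section Gm.
Variable R : realType.
Variables n d : nat.
Local Notation N := (kk n d).+1.

Lemma Gmap_coef (A : 'M[R]_N) m :
  (Gmap A)@_m = \sum_a \sum_b A a b * ((alpha a + alpha b)%MM == m)%:R.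
Proof.
rewrite /Gmap raddf_sum; apply: eq_bigr => a _; rewrite raddf_sum.
apply: eq_bigr => b _; rewrite /= mcoeffZ /mono -mpolyXD mcoeffX //.
Qed.

Lemma Gmap_homog (A : 'M[R]_N) : Gmap A \is (2 * d).-homog.
Proof.
rewrite /Gmap; apply: rpred_sum => a _; apply: rpred_sum => b _.
apply: dhomogZ; rewrite /mono -mpolyXD dhomogX /= mdegD !mdeg_alpha.
by rewrite mul2n addnn.
Qed.

Lemma Gmap_add (A B : 'M[R]_N) : Gmap (A + B) = Gmap A + Gmap B.
Proof.
rewrite /Gmap -big_split; apply: eq_bigr => a _; rewrite -big_split.
by apply: eq_bigr => b _; rewrite mxE scalerDl.
Qed.

Lemma Gmap_scale c (A : 'M[R]_N) : Gmap (c *: A) = c *: Gmap A.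
Proof.
rewrite /Gmap scaler_sumr; apply: eq_bigr => a _; rewrite scaler_sumr.
by apply: eq_bigr => b _; rewrite mxE scalerA.
Qed.

Lemma Gmap_coef_bound (A : 'M[R]_N) m :
  `|(Gmap A)@_m| <= \sum_a \sum_b `|A a b|.
Proof.
rewrite Gmap_coef; apply: le_trans (ler_norm_sum _ _ _) _.
apply: ler_sum => a _; apply: le_trans (ler_norm_sum _ _ _) _.
apply: ler_sum => b _; rewrite normrM; case: eqP => _.
  by rewrite normr1 mulr1.
by rewrite normr0 mulr0.
Qed.

Definition Ncnt m : R := \sum_(a < N) \sum_(b < N) ((alpha a + alpha b)%MM == m)%:R.

Lemma Ncnt_ge1 (a b : 'I_N) : 1 <= Ncnt ((alpha a + alpha b)%MM).
Proof.
rewrite /Ncnt (bigD1 a) //= (bigD1 b) //= eqxx -addrA lerDl.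
apply: addr_ge0; first by apply: sumr_ge0 => ? _; exact: ler0n.
by apply: sumr_ge0 => ? _; apply: sumr_ge0 => ? _; exact: ler0n.
Qed.

Definition Bof (h : {mpoly R[n.+1]}) : 'M[R]_N :=
  \matrix_(a, b) (h@_((alpha a + alpha b)%MM) / Ncnt ((alpha a + alpha b)%MM)).

Lemma Bof_sym h : is_symmx (Bof h).
Proof. by apply/matrixP => a b; rewrite !mxE addmC. Qed.

Lemma Bof_bound h (a b : 'I_N) : `|Bof h a b| <= `|h@_((alpha a + alpha b)%MM)|.
Proof.
have h1 := Ncnt_ge1 a b.
have h0 : 0 < Ncnt ((alpha a + alpha b)%MM) by apply: lt_le_trans h1.
rewrite mxE normrM normfV (gtr0_norm h0) ler_pdivrMr //.
by rewrite ler_peMr.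
Qed.

Lemma Gmap_Bof h : h \is (2 * d).-homog -> Gmap (Bof h) = h.
Proof.
move=> hh; apply/mpolyP => m; rewrite Gmap_coef.
transitivity (h@_m / Ncnt m * Ncnt m).
  rewrite /Ncnt mulr_sumr; apply: eq_bigr => a _; rewrite mulr_sumr.
  apply: eq_bigr => b _; rewrite mxE; case: eqP => [->|_]; first by [].
  by rewrite !mulr0.
have [h0|hn0] := eqVneq (Ncnt m) 0; last by rewrite divfK.
rewrite h0 mulr0; apply/esym/eqP; apply: contraT => hm.
have : m \in msupp h by rewrite mcoeff_msupp.
move/(dhomog_mf hh) => /= hdeg.
have hdeg' : mdeg m = (d + d)%N by rewrite hdeg mul2n addnn.
have [m1 [m2 [hd1 hd2 hm12]]] := @split_mon _ m d hdeg'.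
have [a ha] := @alpha_surj n d _ hd1; have [b hb] := @alpha_surj n d _ hd2.
by have := Ncnt_ge1 a b; rewrite ha hb -hm12 h0 ler10.
Qed.
End Gm.

Theorem theorem2p3 (R : realType) (n d : nat) (hn : (0 < n)%N) (hd : (0 < d)%N)
  (i : nat) (hi : (i <= kk n d - n)%N) (f : {mpoly R[n.+1]}) :
  form_interior (2 * d) (@Cset R n d i) f <->
  (is_form (2 * d) f /\
   exists A : 'M[R]_((kk n d).+1),
     is_symmx A /\ Gmap A = f /\ forall z, @VRset R n d i z -> 0 < qA A z).
Proof.
set N := (kk n d).+1.
have NN0 : 0 < (N * N)%:R :> R by rewrite ltr0n muln_gt0.
split.
  move=> [hf [eps [heps hS]]].
  set del := eps / ((N * N)%:R + 1).
  have hdel : 0 < del by rewrite divr_gt0 // ltr_wpDl // ltW.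
  set g := f - del *: Gmap (1%:M : 'M[R]_N).
  have hg : is_form (2 * d) g.
    by apply: rpredB => //; apply: rpredZ; exact: (@Gmap_homog R n d).
  have hclose : forall m, `|g@_m - f@_m| < eps.
    move=> m; rewrite /g mcoeffB mcoeffZ addrAC subrr add0r normrN normrM.
    rewrite (gtr0_norm hdel).
    apply: le_lt_trans (_ : del * (N * N)%:R < eps).
      rewrite ler_pM2l //; apply: le_trans (@Gmap_coef_bound R n d _ m) _.
      have -> : (N * N)%:R = \sum_(a < N) \sum_(b < N) (1 : R).
        by rewrite !sumr_const !card_ord -mulrnA.
      apply: ler_sum => a _; apply: ler_sum => b _.
      by rewrite mxE; case: eqP; rewrite ?normr1 ?normr0.
    rewrite /del mulrAC ltr_pdivrMr ?ltr_wpDl // ?ltW //.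
    by rewrite ltr_pM2l // ltrDl.
  have [_ [A' [sA' [gA' pA']]]] := hS g hg hclose.
  split => //; exists (A' + del *: 1%:M); split; [|split].
  - by rewrite /is_symmx linearD /= linearZ /= trmx1 sA'.
  - by rewrite Gmap_add Gmap_scale gA' /g subrK.
  - move=> z hz; rewrite qA_add qA_id.
    have [j hj] := @VR_nz R n d i z hz.
    apply: ltr_wpDl; first exact: pA'.
    apply: mulr_gt0 => //; rewrite (bigD1 j) //=.
    apply: ltr_wpDr; first by apply: sumr_ge0 => k _; exact: sqr_ge0.
    by rewrite exprn_even_gt0.
move=> [hf [A [sA [gA pA]]]].
have [c hc hcz] := @VR_coercive R n d i A pA.
set eps := c / (N * N)%:R.
have heps : 0 < eps by rewrite divr_gt0.
split => //; exists eps; split => // g hg hclose.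
set h := g - f.
have hh : h \is (2 * d).-homog by apply: rpredB.
split => //; exists (A + (Bof R n d h)); split; [|split].
- by rewrite /is_symmx linearD /= sA Bof_sym.
- by rewrite Gmap_add gA Gmap_Bof // /h addrC subrK.
- move=> z hz; rewrite qA_add.
  have h1 := hcz z hz.
  set K := `|(\row_j z j : 'rV[R]_N)|.
  have hB : forall a b, `|(Bof R n d h) a b| <= eps.
    move=> a b; apply: le_trans (@Bof_bound R n d h a b) _.
    by rewrite /h mcoeffB; exact/ltW/hclose.
  have hzK : forall j, `|z j| <= K.
    by move=> j; have := @coord_le_norm R N (\row_j z j : 'rV[R]_N) j; rewrite mxE.
  have h2 := @qA_bound R N ((Bof R n d h)) z eps K hB hzK.
  have e2 : (N * N)%:R * (eps * K ^+ 2) = c * K ^+ 2.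
    by rewrite /eps; field; rewrite gt_eqF.
  rewrite e2 in h2.
  move/ler_normlP: h2 => [h3 _].
  rewrite -lerN2 in h3 *; rewrite opprK in h3.
  by apply: le_trans (_ : c * K ^+ 2 - c * K ^+ 2 <= _); [rewrite subrr | exact: lerD].
Qed.
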